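(* Let $X$ be a Tychonoff space with $|X|>2$. Then $\mathrm{girth}(\mathbb{AG}(X))=3$.
   Context: $C(X)$ is the ring of real-valued continuous functions on $X$. $\mathbb{A}(X)$ is the set of nonzero ideals $I$ of $C(X)$ for which there is a nonzero ideal $J$ with $IJ=\{0\}$; $\mathbb{AG}(X)$ has vertex set $\mathbb{A}(X)$, distinct $I,J$ adjacent iff $IJ=\{0\}$. The girth is the minimum length of a cycle in the graph. *)

(* Defs.v *)
From Stdlib Require Import Reals List.
Open Scope R_scope.

Record topology (X : Type) := {
  is_open : (X -> Prop) -> Prop;
  open_full : is_open (fun _ => True);
  open_empty : is_open (fun _ => False);
  open_inter : forall U V, is_open U -> is_open V ->
                 is_open (fun x => U x /\ V x);
  open_union : forall F : (X -> Prop) -> Prop,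
                 (forall U, F U -> is_open U) ->
                 is_open (fun x => exists U, F U /\ U x)
}.
Arguments is_open {X} t _.

Definition is_closed {X} (t : topology X) (A : X -> Prop) : Prop :=
  is_open t (fun x => ~ A x).

Definition continuous {X} (t : topology X) (f : X -> R) : Prop :=
  forall U : R -> Prop, open_set U -> is_open t (fun x => U (f x)).

(* Tychonoff = T1 + completely regular *)
Definition tychonoff {X} (t : topology X) : Prop :=
  (forall x : X, is_closed t (fun y => y = x)) /\
  (forall (A : X -> Prop) (x : X), is_closed t A -> ~ A x ->
     exists f : X -> R, continuous t f /\ f x = 1 /\
       (forall y, A y -> f y = 0) /\ (forall y, 0 <= f y <= 1)).

(* subsets of C(X) are predicates on X -> R *)
Definition zero_fun {X} : X -> R := fun _ => 0.

Definition is_ideal {X} (t : topology X) (I : (X -> R) -> Prop) : Prop :=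
  (forall f, I f -> continuous t f) /\
  I zero_fun /\
  (forall f g, I f -> I g -> I (fun x => f x + g x)) /\
  (forall h f, continuous t h -> I f -> I (fun x => h x * f x)).

Definition set_eq {X} (I J : (X -> R) -> Prop) : Prop :=
  forall f, I f <-> J f.

Definition nonzero_ideal {X} (t : topology X) (I : (X -> R) -> Prop) : Prop :=
  is_ideal t I /\ ~ set_eq I (fun f => f = zero_fun).

(* product ideal IJ: finite sums of products f g with f in I, g in J *)
Definition ideal_mul {X} (I J : (X -> R) -> Prop) : (X -> R) -> Prop :=
  fun h => exists l : list ((X -> R) * (X -> R)),
    Forall (fun p => I (fst p) /\ J (snd p)) l /\
    h = fold_right (fun p acc => fun x => fst p x * snd p x + acc x)
                   zero_fun l.

Definition mul_is_zero {X} (I J : (X -> R) -> Prop) : Prop :=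
  set_eq (ideal_mul I J) (fun f => f = zero_fun).

Definition annihilating {X} (t : topology X) (I : (X -> R) -> Prop) : Prop :=
  nonzero_ideal t I /\ exists J, nonzero_ideal t J /\ mul_is_zero I J.

Definition AG_adj {X} (t : topology X) (I J : (X -> R) -> Prop) : Prop :=
  annihilating t I /\ annihilating t J /\ ~ set_eq I J /\ mul_is_zero I J.

Definition AG_cycle {X} (t : topology X) (n : nat) : Prop :=
  (3 <= n)%nat /\
  exists c : nat -> ((X -> R) -> Prop),
    (forall i, (i < n)%nat -> annihilating t (c i)) /\
    (forall i j, (i < j < n)%nat -> ~ set_eq (c i) (c j)) /\
    (forall i, (i < n)%nat -> AG_adj t (c i) (c (Nat.modulo (S i) n))).

Definition AG_girth_is {X} (t : topology X) (g : nat) : Prop :=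
  AG_cycle t g /\ forall m, AG_cycle t m -> (g <= m)%nat.

(* Main.v *)
Require Import Defs.
From Stdlib Require Import Reals Lra Lia List Classical FunctionalExtensionality PropExtensionality.
Open Scope R_scope.

Lemma pred_ext {A} (P Q : A -> Prop) : (forall x, P x <-> Q x) -> P = Q.
Proof. intros H; apply functional_extensionality; intro x; apply propositional_extensionality; auto. Qed.

Definition cont2 (phi : R -> R -> R) : Prop :=
  forall a b eps, 0 < eps -> exists d, 0 < d /\ forall u v, Rabs (u - a) < d -> Rabs (v - b) < d ->
     Rabs (phi u v - phi a b) < eps.

Lemma open_ball (a d : R) : open_set (fun u => Rabs (u - a) < d).
Proof.
  intros u Hu. assert (Hp : 0 < d - Rabs (u - a)) by lra.
  exists (mkposreal _ Hp). intros y Hy. unfold disc in Hy; simpl in Hy.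
  pose proof (Rabs_triang (y - u) (u - a)).
  replace (y - u + (u - a)) with (y - a) in H by ring. lra.
Qed.

Lemma cont_comp2 {X} (t : topology X) phi f g :
  cont2 phi -> continuous t f -> continuous t g -> continuous t (fun x => phi (f x) (g x)).
Proof.
  intros Hphi Hf Hg U HU.
  set (F := fun V : X -> Prop => exists a b d, 0 < d /\
     (forall u v, Rabs (u - a) < d -> Rabs (v - b) < d -> U (phi u v)) /\
     V = (fun y => Rabs (f y - a) < d /\ Rabs (g y - b) < d)).
  assert (E : (fun x => U (phi (f x) (g x))) = (fun x => exists V, F V /\ V x)).
  { apply pred_ext; intro x; split.
    - intro Hx. destruct (HU _ Hx) as [eps Heps].
      destruct (Hphi (f x) (g x) eps (cond_pos eps)) as [d [Hd Hd2]].
      exists (fun y => Rabs (f y - f x) < d /\ Rabs (g y - g x) < d). split.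
      + exists (f x), (g x), d. split; [exact Hd|]. split; [|reflexivity].
        intros u v Hu Hv. apply Heps. unfold disc. apply Hd2; auto.
      + unfold Rminus; rewrite !Rplus_opp_r, Rabs_R0; lra.
    - intros [V [[a [b [d [Hd [HU2 ->]]]]] [H1 H2]]]. apply HU2; auto. }
  rewrite E. apply open_union. intros V [a [b [d [Hd [_ ->]]]]].
  apply open_inter.
  - apply (Hf (fun u => Rabs (u - a) < d)). apply open_ball.
  - apply (Hg (fun u => Rabs (u - b) < d)). apply open_ball.
Qed.

Lemma cont2_plus : cont2 Rplus.
Proof.
  intros a b eps He. exists (eps/2). split; [lra|]. intros u v Hu Hv.
  pose proof (Rabs_triang (u - a) (v - b)).
  replace (u + v - (a + b)) with (u - a + (v - b)) by ring. lra.
Qed.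

Lemma cont2_minus : cont2 Rminus.
Proof.
  intros a b eps He. exists (eps/2). split; [lra|]. intros u v Hu Hv.
  pose proof (Rabs_triang (u - a) (-(v - b))). rewrite Rabs_Ropp in H.
  replace (u - v - (a - b)) with (u - a + - (v - b)) by ring. lra.
Qed.

Lemma cont2_mult : cont2 Rmult.
Proof.
  intros a b eps He.
  set (K := Rabs a + Rabs b + 1).
  assert (HK : 0 < K) by (unfold K; pose proof (Rabs_pos a); pose proof (Rabs_pos b); lra).
  exists (Rmin 1 (eps / (2 * K))). split.
  { apply Rmin_pos; [lra|]. apply Rdiv_lt_0_compat; lra. }
  intros u v Hu Hv.
  pose proof (Rmin_l 1 (eps / (2 * K))). pose proof (Rmin_r 1 (eps / (2 * K))).
  set (d := Rmin 1 (eps / (2 * K))) in *.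
  replace (u * v - a * b) with ((u - a) * v + a * (v - b)) by ring.
  pose proof (Rabs_triang ((u - a) * v) (a * (v - b))).
  rewrite !Rabs_mult in H1.
  assert (Hvb : Rabs v <= Rabs b + 1).
  { pose proof (Rabs_triang (v - b) b). replace (v - b + b) with v in H2 by ring. lra. }
  assert (Hdk : d * K <= eps / 2).
  { apply Rle_trans with (eps / (2 * K) * K). apply Rmult_le_compat_r; lra.
    right. field. lra. }
  pose proof (Rabs_pos (u - a)). pose proof (Rabs_pos a). pose proof (Rabs_pos v).
  pose proof (Rabs_pos (v - b)).
  assert (Rabs (u - a) * Rabs v <= d * (Rabs b + 1)).
  { apply Rmult_le_compat; lra. }
  assert (Rabs a * Rabs (v - b) <= Rabs a * d).
  { apply Rmult_le_compat_l; lra. }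
  unfold K in Hdk. nra.
Qed.

Lemma cont2_max0 : cont2 (fun u _ => Rmax 0 u).
Proof.
  intros a b eps He. exists eps. split; [lra|]. intros u v Hu Hv.
  unfold Rmax. destruct (Rle_dec 0 u); destruct (Rle_dec 0 a);
  unfold Rabs in *; repeat destruct Rcase_abs; lra.
Qed.

Lemma cont_const {X} (t : topology X) (c : R) : continuous t (fun _ => c).
Proof.
  intros U _. destruct (classic (U c)) as [H|H].
  - replace (fun _ : X => U c) with (fun _ : X => True) by (apply pred_ext; tauto).
    apply open_full.
  - replace (fun _ : X => U c) with (fun _ : X => False) by (apply pred_ext; tauto).
    apply open_empty.
Qed.

Definition Id {X} (t : topology X) (P : X -> Prop) : (X -> R) -> Prop :=
  fun g => continuous t g /\ forall w, g w <> 0 -> P w.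

Lemma Id_ideal {X} (t : topology X) P : is_ideal t (Id t P).
Proof.
  split; [|split; [|split]].
  - intros f [H _]; exact H.
  - split; [apply cont_const|]. unfold zero_fun; intros w H; lra.
  - intros f g [Hf Pf] [Hg Pg]. split.
    + apply (cont_comp2 t Rplus f g cont2_plus Hf Hg).
    + intros w Hw. destruct (Req_dec (f w) 0) as [E|E].
      * apply Pg. rewrite E in Hw. lra.
      * apply Pf; auto.
  - intros h f Hh [Hf Pf]. split.
    + apply (cont_comp2 t Rmult h f cont2_mult Hh Hf).
    + intros w Hw. apply Pf. intro E. rewrite E in Hw. apply Hw; ring.
Qed.

Lemma Id_nonzero {X} (t : topology X) P g x :
  Id t P g -> g x <> 0 -> nonzero_ideal t (Id t P).
Proof.
  intros Hg Hx. split; [apply Id_ideal|]. intro E.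
  apply E in Hg. rewrite Hg in Hx. apply Hx. reflexivity.
Qed.

Lemma Id_mul0 {X} (t : topology X) P Q :
  (forall w, P w -> Q w -> False) -> mul_is_zero (Id t P) (Id t Q).
Proof.
  intros D h; split.
  - intros [l [Hl ->]]. apply functional_extensionality; intro w.
    induction l as [|[a b] l IH]; simpl; [reflexivity|].
    inversion Hl; subst. simpl in H1. destruct H1 as [[_ Ha] [_ Hb]].
    unfold zero_fun in *. rewrite IH by assumption.
    destruct (Req_dec (a w) 0) as [E|E]; [rewrite E; ring|].
    destruct (Req_dec (b w) 0) as [E2|E2]; [rewrite E2; ring|].
    exfalso; apply (D w); auto.
  - intros ->. exists nil. split; [constructor|reflexivity].
Qed.

Lemma closed_pair {X} (t : topology X) (y z : X) :
  (forall x : X, is_closed t (fun w => w = x)) -> is_closed t (fun w => w = y \/ w = z).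
Proof.
  intros T1. unfold is_closed in *.
  replace (fun x => ~ (x = y \/ x = z)) with (fun x => ~ x = y /\ ~ x = z)
    by (apply pred_ext; tauto).
  apply open_inter; auto.
Qed.

Theorem mainTheorem14 (X : Type) (t : topology X) :
  tychonoff t ->
  (exists x y z : X, x <> y /\ y <> z /\ x <> z) ->
  AG_girth_is t 3.
Proof.
  intros [T1 CR] [x [y [z [Hxy [Hyz Hxz]]]]].
  destruct (CR _ x (closed_pair t y z T1)) as [fx [Cx [Fx1 [Fx0 Bx]]]].
  { intros [E|E]; auto. }
  destruct (CR _ y (closed_pair t x z T1)) as [fy [Cy [Fy1 [Fy0 By]]]].
  { intros [E|E]; auto. }
  destruct (CR _ z (closed_pair t x y T1)) as [fz [Cz [Fz1 [Fz0 Bz]]]].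
  { intros [E|E]; auto. }
  set (Px := fun w => fx w > fy w + fz w).
  set (Py := fun w => fy w > fx w + fz w).
  set (Pz := fun w => fz w > fx w + fy w).
  assert (Hw : forall (f g h : X -> R) (c : R -> Prop), continuous t f -> continuous t g ->
     continuous t h -> continuous t (fun w => Rmax 0 (f w - (g w + h w)))).
  { intros f g h _ Hf Hg Hh.
    apply (cont_comp2 t (fun u _ => Rmax 0 u) _ f cont2_max0); auto.
    apply (cont_comp2 t Rminus f _ cont2_minus); auto.
    apply (cont_comp2 t Rplus g h cont2_plus); auto. }
  assert (Gsupp : forall (f g h : X -> R) w, Rmax 0 (f w - (g w + h w)) <> 0 -> f w > g w + h w).
  { intros f g h w H. unfold Rmax in H. destruct (Rle_dec 0 (f w - (g w + h w))); lra. }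
  assert (Gat : forall (f g h : X -> R) w, f w = 1 -> g w = 0 -> h w = 0 ->
     Rmax 0 (f w - (g w + h w)) <> 0).
  { intros f g h w A B C. rewrite A, B, C. unfold Rmax.
    destruct (Rle_dec 0 (1 - (0 + 0))); lra. }
  assert (Nx : nonzero_ideal t (Id t Px)).
  { apply (Id_nonzero t Px (fun w => Rmax 0 (fx w - (fy w + fz w))) x).
    - split; [apply Hw; auto; exact (fun _ => True)|]. intros w; apply Gsupp.
    - apply Gat; auto. }
  assert (Ny : nonzero_ideal t (Id t Py)).
  { apply (Id_nonzero t Py (fun w => Rmax 0 (fy w - (fx w + fz w))) y).
    - split; [apply Hw; auto; exact (fun _ => True)|]. intros w; apply Gsupp.
    - apply Gat; auto. }
  assert (Nz : nonzero_ideal t (Id t Pz)).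
  { apply (Id_nonzero t Pz (fun w => Rmax 0 (fz w - (fx w + fy w))) z).
    - split; [apply Hw; auto; exact (fun _ => True)|]. intros w; apply Gsupp.
    - apply Gat; auto. }
  assert (Dxy : forall w, Px w -> Py w -> False).
  { intros w; unfold Px, Py; specialize (Bx w); specialize (By w); specialize (Bz w); lra. }
  assert (Dxz : forall w, Px w -> Pz w -> False).
  { intros w; unfold Px, Pz; specialize (Bx w); specialize (By w); specialize (Bz w); lra. }
  assert (Dyz : forall w, Py w -> Pz w -> False).
  { intros w; unfold Py, Pz; specialize (Bx w); specialize (By w); specialize (Bz w); lra. }
  assert (Sym : forall P Q : X -> Prop, (forall w, P w -> Q w -> False) -> (forall w, Q w -> P w -> False)).
  { intros P Q D w a b; exact (D w b a). }
  pose proof (Sym _ _ Dxy) as Dyx. pose proof (Sym _ _ Dxz) as Dzx. pose proof (Sym _ _ Dyz) as Dzy.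
  assert (Ax : annihilating t (Id t Px)) by (split; [auto| exists (Id t Py); split; [auto| apply Id_mul0; auto]]).
  assert (Ay : annihilating t (Id t Py)) by (split; [auto| exists (Id t Px); split; [auto| apply Id_mul0; auto]]).
  assert (Az : annihilating t (Id t Pz)) by (split; [auto| exists (Id t Px); split; [auto| apply Id_mul0; auto]]).
  assert (NE : forall P Q, nonzero_ideal t (Id t P) -> (forall w, P w -> Q w -> False) ->
             ~ set_eq (Id t P) (Id t Q)).
  { intros P Q [_ NZ] D E. apply NZ. intro g; split.
    - intro Hg. pose proof Hg as Hg'. apply E in Hg'.
      destruct Hg as [_ HP]; destruct Hg' as [_ HQ].
      apply functional_extensionality; intro w. unfold zero_fun.
      destruct (Req_dec (g w) 0); auto. exfalso; apply (D w); auto.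
    - intros ->. split; [apply cont_const|]. unfold zero_fun; intros w H; lra. }
  split.
  - split; [auto|].
    exists (fun i => match i with 0%nat => Id t Px | 1%nat => Id t Py | _ => Id t Pz end).
    split; [|split].
    + intros [|[|i]] _; auto.
    + intros [|[|[|i]]] [|[|[|j]]] H; try lia; simpl; apply NE; auto.
    + intros [|[|[|i]]] H; try lia; simpl; split; auto; split; auto; split;
        try (apply NE; auto); apply Id_mul0; auto.
  - intros m [H _]; exact H.
Qed.
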